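(* Let $X\subseteq\Omega$ be club in $\Omega$ with $0\notin X$, $\Theta=\Theta_X$. Let $\alpha=\Omega\tilde\alpha$ (a multiple of $\Omega$) and $\beta<\Omega$. If $\alpha+\beta\in\hat\varepsilon_{\Omega+1}$, $\alpha+\beta$ is a limit ordinal, $\alpha+\beta\notin\mathrm{FIX}(X)$, and $(\beta_n)_{n<\omega}$ is a strictly increasing sequence with supremum $\beta$, then $(\Theta(\alpha+\beta_n))_{n<\omega}$ is strictly increasing with supremum $\Theta(\alpha+\beta)$.
   Context: $\Omega$ is the first uncountable ordinal; $\varepsilon_{\Omega+1}$ the least $\varepsilon>\Omega$ with $\omega^\varepsilon=\varepsilon$. Every $0<\xi<\varepsilon_{\Omega+1}$ has a unique $\Omega$-normal form $\xi=\Omega^{\alpha}\beta+\gamma$ with $0<\beta<\Omega$, $\gamma<\Omega^{\alpha}$. $C(0)=\{0\}$, $C(\Omega^\alpha\beta+\gamma)=C(\alpha)\cup C(\gamma)\cup\{\beta\}$; $\xi^*=\max C(\xi)$. For $\theta<\Omega$: $0[\theta]=1[\theta]=0$; $(\Omega^\alpha\beta+\gamma)[\theta]=\Omega^\alpha\beta+\gamma[\theta]$ if $\gamma>0$; $(\Omega^\alpha\beta)[\theta]=\Omega^\alpha\theta$ if $\beta$ is a limit; $\Omega^{\alpha+1}[\theta]=\Omega^\alpha\theta$; $(\Omega^\alpha(\beta+1))[\theta]=\Omega^\alpha\beta+(\Omega^\alpha)[\theta]$ if $\beta>0$; $\Omega^\alpha[\theta]=\Omega^{\alpha[\theta]}$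 if $\alpha$ is a limit. $\tau(0)=0$, $\tau(\zeta+1)=1$, $\tau(\Omega^\alpha\beta+\gamma)=\tau(\gamma)$ if $\gamma>0$, $\tau(\Omega^\alpha\beta)=\beta$ if $\beta$ limit, $\tau(\Omega^\alpha(\beta+1))=\tau(\alpha)$ if $\alpha$ limit, $\tau(\Omega^{\alpha+1}(\beta+1))=\Omega$. $\Theta_X(\xi)$ is the least $\theta\in X$ with $\theta>\xi^*$ such that all $\zeta<\xi$ with $\zeta^*<\theta$ have $\Theta_X(\zeta)<\theta$. $\Omega_0=1$, $\Omega_{n+1}=\Omega^{\Omega_n}$, $\Theta_X(\varepsilon_{\Omega+1})=\sup_n\Theta_X(\Omega_n)$, $\hat\varepsilon_{\Omega+1}=\{\xi<\varepsilon_{\Omega+1}:\xi^*<\Theta_X(\varepsilon_{\Omega+1})\}$. $\mathrm{FIX}(X)$ is the set of $\xi<\varepsilon_{\Omega+1}$ with $(\xi[1])^*<\xi^*=\tau(\xi)=\Theta_X(\gamma)$ for some $\gamma>\xi$. *)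

(* Defs.v *)
(* Ordinals below epsilon_{Omega+1} are represented by
   Omega-normal forms whose coefficients live in an abstract copy of
   Omega = omega_1 (a well-order that is uncountable but all of whose proper
   initial segments are countable; this characterizes omega_1 up to iso). *)
From Stdlib Require Import ClassicalEpsilon ClassicalDescription List.
Set Implicit Arguments.

Record Omega1 := {
  carrier :> Type;
  ltO : carrier -> carrier -> Prop;
  inhO : carrier;
  ltO_irrefl : forall x, ~ ltO x x;
  ltO_trans : forall x y z, ltO x y -> ltO y z -> ltO x z;
  ltO_total : forall x y, ltO x y \/ x = y \/ ltO y x;
  ltO_wf : well_founded ltO;
  ltO_uncountable : ~ exists f : carrier -> nat, forall x y, f x = f y -> x = y;
  ltO_segments_countable :
    forall a, exists f : {x | ltO x a} -> nat, forall x y, f x = f y -> x = y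
}.

Definition pdec (P : Prop) : bool :=
  if excluded_middle_informative P then true else false.

Section Defs.
Variable O : Omega1.
Local Notation lt := (ltO O).

Definition leO (x y : O) := x = y \/ lt x y.
Definition epsO (P : O -> Prop) : O := epsilon (inhabits (inhO O)) P.

Definition z0 : O := epsO (fun x => forall y, ~ lt y x).
Definition succO (b : O) : O :=
  epsO (fun s => lt b s /\ forall y, lt b y -> leO s y).
Definition one : O := succO z0.
Definition isSuccO (b : O) := exists c, b = succO c.
Definition predO (b : O) : O := epsO (fun c => b = succO c).
Definition isLimitO (b : O) := b <> z0 /\ ~ isSuccO b.
Definition isFiniteO (b : O) := forall c, leO c b -> ~ isLimitO c.
(* 1 + b for b < Omega *)
Definition onepO (b : O) : O := if pdec (isFiniteO b) then succO b else b.
Definition maxO (x y : O) : O := if pdec (lt x y) then y else x.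
Definition IsSup (f : nat -> O) (s : O) :=
  (forall n, leO (f n) s) /\ (forall c, (forall n, leO (f n) c) -> leO s c).

Definition club (X : O -> Prop) :=
  (forall a, exists x, X x /\ lt a x) /\
  (forall l, isLimitO l -> (forall a, lt a l -> exists x, X x /\ lt a x /\ lt x l) -> X l).

(* Omega-normal forms: TT a b g = Omega^a * b + g *)
Inductive T : Type := TZ | TT (a : T) (b : O) (g : T).

Fixpoint ltT (x y : T) {struct x} : Prop :=
  match x, y with
  | TZ, TZ => False
  | TZ, TT _ _ _ => True
  | TT _ _ _, TZ => False
  | TT a b g, TT a' b' g' =>
      ltT a a' \/ (a = a' /\ (lt b b' \/ (b = b' /\ ltT g g')))
  end.

(* well-formed normal forms: 0 < b < Omega, g < Omega^a *)
Fixpoint wfT (x : T) : Prop :=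
  match x with
  | TZ => True
  | TT a b g => wfT a /\ wfT g /\ lt z0 b /\
      match g with TZ => True | TT a' _ _ => ltT a' a end
  end.

Fixpoint Cset (x : T) : list O :=
  match x with
  | TZ => z0 :: nil
  | TT a b g => Cset a ++ Cset g ++ (b :: nil)
  end.
Definition star (x : T) : O := fold_right maxO z0 (Cset x).

Definition oneT : T := TT TZ one TZ.
Definition omt (a : T) (t : O) : T := if pdec (t = z0) then TZ else TT a t TZ.

Fixpoint succT (x : T) : T :=
  match x with
  | TZ => oneT
  | TT a b g =>
      match g with
      | TT _ _ _ => TT a b (succT g)
      | TZ => match a with
              | TZ => TT TZ (succO b) TZ
              | _ => TT a b oneT
              end
      end
  end.
Definition isSuccT (x : T) := exists z, wfT z /\ x = succT z.
Definition predT (x : T) : T := epsilon (inhabits TZ) (fun z => wfT z /\ x = succT z).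
Definition isLimitT (x : T) := x <> TZ /\ ~ isSuccT x.

Fixpoint fs (x : T) (t : O) : T :=
  match x with
  | TZ => TZ
  | TT a b g =>
      match g with
      | TT _ _ _ => TT a b (fs g t)
      | TZ =>
          let pw :=
            match a with
            | TZ => TZ (* Omega^0 = 1, 1[t] = 0 *)
            | _ => if pdec (isSuccT a) then omt (predT a) t
                   else TT (fs a t) one TZ
            end in
          if pdec (isLimitO b) then omt a t
          else if pdec (b = one) then pw
          else TT a (predO b) pw
      end
  end.

(* tau; None stands for Omega *)
Fixpoint tau (x : T) : option O :=
  match x with
  | TZ => Some z0
  | TT a b g =>
      match g with
      | TT _ _ _ => tau g
      | TZ =>
          if pdec (isLimitO b) then Some b
          else match a with
               | TZ => Some one
               | _ => if pdec (isSuccT a) then None else tau a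
               end
      end
  end.

(* Omega * x *)
Definition onepT (a : T) : T :=
  match a with
  | TZ => oneT
  | TT e c h => match e with TZ => TT TZ (onepO c) h | _ => a end
  end.
Fixpoint omul (x : T) : T :=
  match x with
  | TZ => TZ
  | TT a b g => TT (onepT a) b (omul g)
  end.

(* alpha + beta for alpha a multiple of Omega and beta < Omega *)
Fixpoint appT (x y : T) : T :=
  match x with TZ => y | TT a b g => TT a b (appT g y) end.
Definition addOm (a : T) (b : O) : T :=
  if pdec (b = z0) then a else appT a (TT TZ b TZ).

(* Theta_X, characterized by its defining recursion *)
Definition Theta_spec (X : O -> Prop) (Th : T -> O) :=
  forall xi, wfT xi ->
    (X (Th xi) /\ lt (star xi) (Th xi) /\
     (forall z, wfT z -> ltT z xi -> lt (star z) (Th xi) -> lt (Th z) (Th xi))) /\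
    (forall th, X th -> lt (star xi) th ->
       (forall z, wfT z -> ltT z xi -> lt (star z) th -> lt (Th z) th) ->
       leO (Th xi) th).

Fixpoint OmegaN (n : nat) : T :=
  match n with 0 => oneT | S m => TT (OmegaN m) one TZ end.

Definition in_hat (Th : T -> O) (xi : T) :=
  wfT xi /\ exists s, IsSup (fun n => Th (OmegaN n)) s /\ lt (star xi) s.

Definition inFIX (Th : T -> O) (xi : T) :=
  wfT xi /\ lt (star (fs xi one)) (star xi) /\ tau xi = Some (star xi) /\
  exists g, wfT g /\ ltT xi g /\ Th g = star xi.

End Defs.

Arguments club {O} X.
Arguments Theta_spec {O} X Th.
Arguments IsSup {O} f s.
Arguments wfT {O} x.
Arguments in_hat {O} Th xi.
Arguments inFIX {O} Th xi.
Arguments isLimitT {O} x.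
Arguments addOm {O} a b.
Arguments omul {O} x.

(* Main.v *)
Require Import Defs.
From Stdlib Require Import ClassicalEpsilon ClassicalDescription Classical List Lia.
Set Implicit Arguments. Unset Strict Implicit.

Lemma lt_irr {O : Omega1} {x : O} : ~ ltO O x x.
Proof. apply ltO_irrefl. Qed.
Lemma lt_trans' {O : Omega1} (x y z : O) : ltO O x y -> ltO O y z -> ltO O x z.
Proof. apply ltO_trans. Qed.
Lemma le_trans' {O : Omega1} (x y z : O) : leO O x y -> leO O y z -> leO O x z.
Proof. unfold leO; intros [->|H] [->|H']; auto. right; eapply lt_trans'; eauto. Qed.
Lemma le_lt {O : Omega1} (x y z : O) : leO O x y -> ltO O y z -> ltO O x z.
Proof. intros [->|H] H'; auto. eapply lt_trans'; eauto. Qed.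
Lemma lt_le {O : Omega1} (x y z : O) : ltO O x y -> leO O y z -> ltO O x z.
Proof. intros H [<-|H']; auto. eapply lt_trans'; eauto. Qed.
Lemma nlt_le {O : Omega1} (x y : O) : ~ ltO O x y -> leO O y x.
Proof. intros H. destruct (ltO_total O x y) as [h|[h|h]]; [tauto|left; auto|right; auto]. Qed.
Lemma le_nlt {O : Omega1} (x y : O) : leO O x y -> ~ ltO O y x.
Proof. intros H H'. apply (lt_irr (le_lt H H')). Qed.
Lemma lt_le_weak {O : Omega1} (x y : O) : ltO O x y -> leO O x y.
Proof. right; auto. Qed.
Lemma le_refl' {O : Omega1} (x : O) : leO O x x.
Proof. left; auto. Qed.
Lemma le_antisym {O : Omega1} (x y : O) : leO O x y -> leO O y x -> x = y.
Proof. intros [->|H] H'; auto. exfalso; exact (le_nlt H' H). Qed.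

Lemma wf_min {O : Omega1} (P : O -> Prop) : (exists x, P x) ->
  exists m, P m /\ forall y, P y -> leO O m y.
Proof.
  intros [x Px]. apply NNPP; intro Hn.
  assert (forall z, ~ P z).
  { intro z. induction z as [z IH] using (well_founded_ind (ltO_wf O)).
    intro Pz. apply Hn. exists z; split; auto. intros y Py.
    apply nlt_le. intro Hy. exact (IH y Hy Py). }
  exact (H x Px).
Qed.

Lemma z0_min {O : Omega1} (y : O) : ~ ltO O y (z0 O).
Proof.
  unfold z0, epsO. revert y. apply epsilon_spec.
  destruct (@wf_min O (fun _ : O => True) (ex_intro _ (inhO O) I)) as [m [_ Hm]].
  exists m. intros y Hy. exact (le_nlt (Hm y I) Hy).
Qed.
Lemma z0_le {O : Omega1} (y : O) : leO O (z0 O) y.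
Proof. apply nlt_le, z0_min. Qed.

Lemma succ_spec {O : Omega1} (c : O) : (exists y, ltO O c y) ->
  ltO O c (succO O c) /\ forall y, ltO O c y -> leO O (succO O c) y.
Proof.
  intro H. unfold succO, epsO. apply epsilon_spec.
  destruct (wf_min H) as [m [H1 H2]]. exists m; auto.
Qed.
Lemma lt_succ {O : Omega1} (c y : O) : (exists y, ltO O c y) ->
  ltO O y (succO O c) -> leO O y c.
Proof.
  intros H H'. apply nlt_le. intro H2. destruct (succ_spec H) as [_ H3].
  exact (le_nlt (H3 _ H2) H').
Qed.

Lemma sup_lt {O : Omega1} (f : nat -> O) s a : IsSup f s -> ltO O a s -> exists n, ltO O a (f n).
Proof.
  intros [H1 H2] H. apply NNPP; intro Hn.
  assert (leO O s a). { apply H2. intro n. apply nlt_le. intro; apply Hn; eauto. }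
  exact (le_nlt H0 H).
Qed.

Lemma sup_exists {O : Omega1} (f : nat -> O) u : (forall n, leO O (f n) u) -> exists s, IsSup f s.
Proof.
  intro H. destruct (@wf_min O (fun c => forall n, leO O (f n) c) (ex_intro _ u H)) as [m [H1 H2]].
  exists m; split; auto.
Qed.

Lemma sup_not_succ {O : Omega1} (f : nat -> O) s (hnm : forall a : O, exists y, ltO O a y) :
  (forall n, ltO O (f n) (f (S n))) -> IsSup f s -> isLimitO O s.
Proof.
  intros Hi Hs. assert (Hlt : forall n, ltO O (f n) s).
  { intro n. eapply lt_le; [apply Hi| apply Hs]. }
  split.
  - intro E. apply (@z0_min O (f 0)). rewrite <- E; auto.
  - intros [c E]. assert (forall n, leO O (f n) c).
    { intro n. apply lt_succ; auto. rewrite <- E; auto. }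
    destruct Hs as [_ H2]. specialize (H2 _ H).
    destruct (succ_spec (hnm c)) as [H3 _]. rewrite <- E in H3. exact (le_nlt H2 H3).
Qed.
Set Implicit Arguments. Unset Strict Implicit.

Lemma ltT_irr {O : Omega1} (x : T O) : ~ ltT x x.
Proof.
  induction x as [|a IHa b g IHg]; simpl; auto.
  intros [H|[_ [H|[_ H]]]]; eauto using lt_irr.
  apply (lt_irr H).
Qed.

Lemma ltT_trans {O : Omega1} (x y z : T O) : ltT x y -> ltT y z -> ltT x z.
Proof.
  revert y z. induction x as [|a IHa b g IHg]; intros [|a' b' g'] [|a'' b'' g'']; simpl; auto; try tauto.
  intros H1 H2.
  destruct H1 as [H1|[<- H1]]; destruct H2 as [H2|[<- H2]]; eauto.
  right; split; auto.
  destruct H1 as [H1|[<- H1]]; destruct H2 as [H2|[<- H2]]; eauto using lt_trans'.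
Qed.

Lemma ltT_total {O : Omega1} (x y : T O) : ltT x y \/ x = y \/ ltT y x.
Proof.
  revert y. induction x as [|a IHa b g IHg]; intros [|a' b' g']; simpl; auto.
  destruct (IHa a') as [H|[<-|H]]; auto 10.
  destruct (ltO_total O b b') as [H|[<-|H]]; auto 10.
  destruct (IHg g') as [H|[<-|H]]; auto 10.
Qed.

Lemma appT_nz {O : Omega1} (a y : T O) : y <> (TZ _) -> appT a y <> (TZ _).
Proof. destruct a; simpl; auto; discriminate. Qed.

Lemma app_gt {O : Omega1} (a y : T O) : y <> (TZ _) -> ltT a (appT a y).
Proof.
  intro Hy. induction a as [|a IHa b g IHg]; simpl.
  - destruct y; simpl; auto.
  - right; split; auto.
Qed.

Lemma app_mono {O : Omega1} (a y y' : T O) : ltT y y' -> ltT (appT a y) (appT a y').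
Proof.
  intro H. induction a as [|a IHa b g IHg]; simpl; auto.
Qed.

Lemma wf_app_l {O : Omega1} (a y : T O) : wfT (appT a y) -> wfT a.
Proof.
  induction a as [|a IHa b g IHg]; simpl; auto.
  intros [H1 [H2 [H3 H4]]]. repeat split; auto.
  destruct g; simpl in *; auto.
Qed.

Lemma wf_app_c {O : Omega1} (a : T O) (b c : O) :
  wfT (appT a (TT (TZ _) b (TZ _))) -> ltO O (z0 O) c -> wfT (appT a (TT (TZ _) c (TZ _))).
Proof.
  intros H Hc. induction a as [|a IHa b' g IHg]; simpl in *.
  - tauto.
  - destruct H as [H1 [H2 [H3 H4]]]. repeat split; auto.
    destruct g; simpl in *; auto.
Qed.

Lemma decomp {O : Omega1} (a : T O) (b : O) (z : T O) : ltO O (z0 O) b -> wfT z ->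
  (ltT a z \/ z = a) -> ltT z (appT a (TT (TZ _) b (TZ _))) ->
  exists c, ltO O c b /\ z = addOm a c.
Proof.
  intro Hb0. revert z. induction a as [|a IHa b1 g IHg]; intros z Hz H1 H2; simpl in *.
  - destruct z as [|a' b' g'].
    + exists (z0 O). split; auto.
      unfold addOm, pdec. destruct excluded_middle_informative; auto; tauto.
    + simpl in H2. destruct H2 as [H2|[-> [H2|[-> H2]]]]; [destruct a'; simpl in H2; tauto | | destruct g'; simpl in H2; tauto].
      exists b'. split; auto. destruct Hz as [_ [Hg [Hb Hh]]].
      destruct g' as [|a3 b3 g3]; [|destruct a3; simpl in Hh; tauto].
      unfold addOm, pdec. destruct excluded_middle_informative as [e|]; auto.
      subst. exfalso; exact (lt_irr Hb).
  - destruct z as [|a' b' g'].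
    + exfalso. destruct H1 as [H1|H1]; [exact H1|discriminate].
    + simpl in Hz. destruct Hz as [Ha [Hg _]].
      assert (a' = a /\ b' = b1 /\ (ltT g g' \/ g' = g) /\ ltT g' (appT g (TT (TZ _) b (TZ _)))) as [-> [-> [H3 H4]]].
      { destruct H1 as [H1|H1].
        - simpl in H1, H2.
          destruct H1 as [H1|[<- [H1|[<- H1]]]]; destruct H2 as [H2|[E [H2|[E' H2]]]];
            try (exfalso; eapply ltT_irr; eapply ltT_trans; eauto; fail);
            try (subst; exfalso; eapply ltT_irr; eauto; fail);
            try (subst; exfalso; eapply lt_irr; eapply lt_trans'; eauto; fail);
            try (subst; exfalso; eapply lt_irr; eauto; fail); subst; auto.
        - injection H1 as -> -> ->. simpl in H2.
          destruct H2 as [H2|[_ [H2|[_ H2]]]];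
            [exfalso; eapply ltT_irr; eauto| exfalso; eapply lt_irr; eauto| auto]. }
      destruct (IHg g' Hg H3 H4) as [c [Hc E]]. exists c; split; auto.
      unfold addOm, pdec in *. destruct excluded_middle_informative; subst; auto.
Qed.
Set Implicit Arguments. Unset Strict Implicit.

Lemma maxO_cases {O : Omega1} (x y : O) : (maxO O x y = x \/ maxO O x y = y) /\
  leO O x (maxO O x y) /\ leO O y (maxO O x y).
Proof.
  unfold maxO, pdec. destruct excluded_middle_informative as [h|h].
  - split; auto. split; [right; auto| left; auto].
  - split; auto. split; [left; auto| apply nlt_le; auto].
Qed.

Lemma fold_ub {O : Omega1} (l : list O) e : In e l -> leO O e (fold_right (maxO O) (z0 O) l).
Proof.
  induction l as [|x l IH]; simpl; [tauto|].
  destruct (maxO_cases x (fold_right (maxO O) (z0 O) l)) as [_ [H1 H2]].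
  intros [<-|H]; auto. eapply le_trans'; eauto.
Qed.

Lemma fold_in {O : Omega1} (l : list O) : In (fold_right (maxO O) (z0 O) l) (z0 O :: l).
Proof.
  induction l as [|x l IH]; simpl; auto.
  destruct (maxO_cases x (fold_right (maxO O) (z0 O) l)) as [[E|E] _]; rewrite E; auto.
  simpl in IH. tauto.
Qed.

Lemma z0_in_C {O : Omega1} (x : T O) : In (z0 O) (Cset x).
Proof. induction x; simpl; auto. apply in_or_app; auto. Qed.

Lemma star_in {O : Omega1} (x : T O) : In (star x) (Cset x).
Proof.
  unfold star. destruct (fold_in (Cset x)) as [E|H]; auto. rewrite <- E; apply z0_in_C.
Qed.

Lemma star_ub {O : Omega1} (x : T O) e : In e (Cset x) -> leO O e (star x).
Proof. apply fold_ub. Qed.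

Lemma Cset_app1 {O : Omega1} (a y : T O) e : In e (Cset (appT a y)) -> In e (Cset a) \/ In e (Cset y).
Proof.
  induction a as [|a IHa b g IHg]; simpl; auto.
  intro H. repeat (apply in_app_or in H; destruct H as [H|H]); auto 6 using in_or_app.
  - destruct (IHg H); auto 6 using in_or_app.
Qed.

Lemma Cset_app2 {O : Omega1} (a y : T O) e : In e (Cset a) -> In e (Cset (appT a y)) \/ e = z0 O.
Proof.
  induction a as [|a IHa b g IHg]; simpl; auto.
  - intros [H|[]]; right; auto.
  - intro H. repeat (apply in_app_or in H; destruct H as [H|H]); auto 6 using in_or_app.
    destruct (IHg H); auto 6 using in_or_app.
Qed.

Lemma Cset_app3 {O : Omega1} (a y : T O) e : In e (Cset y) -> In e (Cset (appT a y)).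
Proof.
  induction a as [|a IHa b g IHg]; simpl; auto.
  intro H. apply in_or_app; right; apply in_or_app; left; auto.
Qed.

Lemma addOm_nz {O : Omega1} (a : T O) c : c <> z0 O -> addOm a c = appT a (TT (TZ _) c (TZ _)).
Proof. intro h. unfold addOm, pdec. destruct excluded_middle_informative; tauto. Qed.
Lemma addOm_z {O : Omega1} (a : T O) : addOm a (z0 O) = a.
Proof. unfold addOm, pdec. destruct excluded_middle_informative; tauto. Qed.

Lemma S1 {O : Omega1} (a : T O) c : leO O (star a) (star (addOm a c)).
Proof.
  destruct (classic (c = z0 O)) as [->|h].
  - rewrite addOm_z; apply le_refl'.
  - rewrite addOm_nz; auto. destruct (Cset_app2 (TT (TZ _) c (TZ _)) (star_in a)) as [H|H].
    + apply star_ub; auto.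
    + rewrite H; apply z0_le.
Qed.

Lemma S2 {O : Omega1} (a : T O) c : leO O c (star (addOm a c)).
Proof.
  destruct (classic (c = z0 O)) as [->|h].
  - apply z0_le.
  - rewrite addOm_nz; auto. apply star_ub, Cset_app3. simpl; auto.
Qed.

Lemma S3 {O : Omega1} (a : T O) c t : leO O (star a) t -> leO O c t -> leO O (star (addOm a c)) t.
Proof.
  intros H1 H2. destruct (classic (c = z0 O)) as [->|h].
  - rewrite addOm_z; auto.
  - rewrite addOm_nz; auto. destruct (Cset_app1 (star_in (appT a (TT (TZ _) c (TZ _))))) as [H|H].
    + eapply le_trans'; [apply star_ub; eauto| auto].
    + simpl in H. destruct H as [<-|[<-|[<-|[]]]]; auto; apply z0_le.
Qed.

Lemma fs_app {O : Omega1} (a y : T O) t : y <> TZ _ -> fs (appT a y) t = appT a (fs y t).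
Proof.
  intro Hy. induction a as [|a IHa b g IHg]; simpl; auto.
  rewrite <- IHg. destruct (appT g y) eqn:E; auto. exfalso; exact (appT_nz Hy E).
Qed.

Lemma tau_app {O : Omega1} (a y : T O) : y <> TZ _ -> tau (appT a y) = tau y.
Proof.
  intro Hy. induction a as [|a IHa b g IHg]; simpl; auto.
  rewrite <- IHg. destruct (appT g y) eqn:E; auto. exfalso; exact (appT_nz Hy E).
Qed.

Lemma fs_last {O : Omega1} (b : O) : isLimitO O b -> one O <> z0 O ->
  fs (TT (TZ _) b (TZ _)) (one O) = TT (TZ _) (one O) (TZ _).
Proof.
  intros Hb H1. simpl. unfold pdec. destruct excluded_middle_informative; [|tauto].
  unfold omt, pdec. destruct excluded_middle_informative; tauto.
Qed.

Lemma tau_last {O : Omega1} (b : O) : isLimitO O b -> tau (TT (TZ _) b (TZ _)) = Some b.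
Proof.
  intros Hb. simpl. unfold pdec. destruct excluded_middle_informative; tauto.
Qed.

Lemma omega_above {O : Omega1} (x : T O) : exists k, ltT x (OmegaN O k).
Proof.
  induction x as [|a [k IHa] b g _].
  - exists 0; simpl; auto.
  - exists (S k); simpl; auto.
Qed.

Lemma omega_step {O : Omega1} n : ltT (OmegaN O n) (OmegaN O (S n)).
Proof. induction n; simpl; auto. Qed.

Lemma omega_mono {O : Omega1} n m : n <= m -> ltT (OmegaN O n) (OmegaN O m) \/ n = m.
Proof.
  induction 1; auto. left. destruct IHle as [H'|<-].
  - eapply ltT_trans; eauto using omega_step.
  - apply omega_step.
Qed.

Lemma omega_C {O : Omega1} n e : In e (Cset (OmegaN O n)) -> e = z0 O \/ e = one O.
Proof.
  induction n; simpl; intros H.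
  - destruct H as [H|[H|[H|[]]]]; subst; auto.
  - repeat (apply in_app_or in H; destruct H as [H|H]); auto; simpl in H;
    destruct H as [H|[H|[]]]; subst; auto.
Qed.

Lemma omega_wf {O : Omega1} n : ltO O (z0 O) (one O) -> wfT (OmegaN O n).
Proof. intro h. induction n; simpl; auto. Qed.
Set Implicit Arguments. Unset Strict Implicit.

Lemma A_mono {O : Omega1} (a : T O) c d : ltO O c d -> ltT (addOm a c) (addOm a d).
Proof.
  intro H. assert (Hd : d <> z0 O). { intro E; subst; exact (z0_min H). }
  rewrite (addOm_nz a Hd).
  destruct (classic (c = z0 O)) as [->|Hc].
  - rewrite addOm_z. apply app_gt. discriminate.
  - rewrite (addOm_nz a Hc). apply app_mono. simpl. auto.
Qed.

Lemma A_ge {O : Omega1} (a : T O) c : ltT a (addOm a c) \/ addOm a c = a.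
Proof.
  destruct (classic (c = z0 O)) as [->|Hc].
  - rewrite addOm_z; auto.
  - rewrite (addOm_nz a Hc). left; apply app_gt; discriminate.
Qed.

Lemma A_wf {O : Omega1} (a : T O) b c : wfT (appT a (TT (TZ _) b (TZ _))) -> wfT (addOm a c).
Proof.
  intro H. destruct (classic (c = z0 O)) as [->|Hc].
  - rewrite addOm_z. eapply wf_app_l; eauto.
  - rewrite (addOm_nz a Hc). eapply wf_app_c; eauto.
    destruct (z0_le c) as [E|E]; auto. congruence.
Qed.

Lemma omega_star {O : Omega1} n : ltO O (z0 O) (one O) -> star (OmegaN O n) = one O.
Proof.
  intro h. assert (Hin : In (one O) (Cset (OmegaN O n))).
  { destruct n; simpl; [auto| apply in_or_app; right; simpl; auto]. }
  pose proof (star_ub Hin) as H1.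
  destruct (omega_C (star_in (OmegaN O n))) as [E|E]; auto.
  rewrite E in H1. exfalso. exact (le_nlt H1 h).
Qed.

Lemma le_mono_nat {O : Omega1} (f : nat -> O) : (forall n, ltO O (f n) (f (S n))) ->
  forall n m, n <= m -> leO O (f n) (f m).
Proof.
  intros H n m Hnm. induction Hnm; [apply le_refl'|].
  eapply le_trans'; eauto. right; auto.
Qed.
Unset Implicit Arguments. Set Strict Implicit.

Theorem lemma4p3 (O : Omega1) (X : O -> Prop) (Th : T O -> O)
  (hX : club X) (h0 : ~ X (z0 O)) (hTh : Theta_spec X Th)
  (at_ : T O) (hat : wfT at_) (b : O) (bs : nat -> O)
  (hhat : in_hat Th (addOm (omul at_) b))
  (hlim : isLimitT (addOm (omul at_) b))
  (hfix : ~ inFIX Th (addOm (omul at_) b))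
  (hinc : forall n, ltO O (bs n) (bs (S n)))
  (hsup : IsSup bs b) :
  (forall n, ltO O (Th (addOm (omul at_) (bs n))) (Th (addOm (omul at_) (bs (S n))))) /\
  IsSup (fun n => Th (addOm (omul at_) (bs n))) (Th (addOm (omul at_) b)).
Proof.
  generalize dependent (omul at_). intros al hhat hlim hfix.
  assert (hnm : forall a : O, exists y, ltO O a y).
  { intro a. destruct (proj1 hX a) as [x [_ H]]; eauto. }
  assert (HbsLt : forall n, ltO O (bs n) b).
  { intro n. eapply lt_le; [apply hinc| apply hsup]. }
  assert (Hb0 : ltO O (z0 O) b). { eapply le_lt; [apply z0_le| apply (HbsLt 0)]. }
  assert (Hbne : b <> z0 O). { intro E; rewrite E in Hb0; exact (lt_irr Hb0). }
  assert (Hblim : isLimitO O b) by (eapply sup_not_succ; eauto).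
  destruct (succ_spec (hnm (z0 O))) as [Hone Hone2].
  change (succO O (z0 O)) with (one O) in Hone, Hone2.
  assert (Honeb : ltO O (one O) b).
  { destruct (Hone2 b Hb0) as [E|E]; auto. exfalso. apply (proj2 Hblim). exists (z0 O). rewrite <- E. reflexivity. }
  assert (Honez : one O <> z0 O). { intro E. rewrite E in Hone. exact (lt_irr Hone). }
  assert (Hxi : addOm al b = appT al (TT (TZ _) b (TZ _))) by (apply addOm_nz; auto).
  assert (Hwfxi : wfT (addOm al b)) by apply hhat.
  assert (HwfA : forall c, wfT (addOm al c)).
  { intro c. rewrite Hxi in Hwfxi. eapply A_wf; eauto. }
  assert (Hmono : forall c d, ltO O c d -> ltO O (Th (addOm al c)) (Th (addOm al d))).
  { intros c d H. destruct (hTh _ (HwfA d)) as [[_ [Hs Ht]] _].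
    apply Ht; auto. apply A_mono; auto.
    eapply le_lt; [|apply Hs]. apply S3; [apply S1|].
    eapply le_trans'; [right; exact H| apply S2]. }
  set (f := fun n => Th (addOm al (bs n))).
  assert (Hf : forall n, ltO O (f n) (f (S n))) by (intro n; apply Hmono; auto).
  split; [exact Hf|].
  assert (Hfxi : forall n, ltO O (f n) (Th (addOm al b))) by (intro n; apply Hmono; auto).
  destruct (sup_exists (u := Th (addOm al b)) (f := f)) as [s Hs].
  { intro n; right; auto. }
  assert (Hslt : forall n, ltO O (f n) s) by (intro n; eapply lt_le; [apply Hf| apply Hs]).
  assert (Hslim : isLimitO O s) by (eapply sup_not_succ; eauto).
  assert (HXs : X s).
  { apply (proj2 hX s Hslim). intros a Ha. destruct (sup_lt Hs Ha) as [n Hn].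
    exists (f n). repeat split; auto. apply (hTh _ (HwfA _)). }
  assert (K : forall z, wfT z -> ltT z (addOm al b) -> ltO O (star z) s -> ltO O (Th z) s).
  { intros z Hz Hzx Hzs. destruct (ltT_total z al) as [H|H].
    - destruct (sup_lt Hs Hzs) as [n Hn].
      eapply lt_trans'; [|apply (Hslt n)].
      destruct (hTh _ (HwfA (bs n))) as [[_ [_ Ht]] _]. apply Ht; auto.
      destruct (A_ge al (bs n)) as [H'|H']; [eapply ltT_trans; eauto| rewrite H'; auto].
    - assert (H2 : ltT al z \/ z = al) by tauto. rewrite Hxi in Hzx. destruct (decomp Hb0 Hz H2 Hzx) as [c [Hc ->]].
      destruct (sup_lt hsup Hc) as [m Hm].
      eapply lt_trans'; [apply (Hmono _ _ Hm)| apply Hslt]. }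
  assert (Hbs : leO O b s).
  { apply hsup. intro n. right. eapply le_lt; [apply (S2 al)|].
    eapply lt_trans'; [apply (hTh _ (HwfA _))| apply (Hslt n)]. }
  assert (Hal : ltO O (star al) s).
  { eapply le_lt; [apply (S1 al (bs 0))|]. eapply lt_trans'; [apply (hTh _ (HwfA _))| apply (Hslt 0)]. }
  assert (Hbs' : ltO O b s).
  { destruct Hbs as [E|E]; auto. exfalso. subst s.
    destruct hhat as [_ [s' [Hs' Hxs']]].
    assert (Hbx : leO O b (star (addOm al b))) by apply S2.
    assert (Hbs'' : ltO O b s') by (eapply le_lt; eauto).
    destruct (sup_lt Hs' Hbs'') as [n Hn]. simpl in Hn.
    destruct (omega_above (addOm al b)) as [k Hk].
    assert (Hwm : forall j, wfT (OmegaN O j)) by (intro; apply omega_wf; auto).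
    assert (HOm : ltO O b (Th (OmegaN O (n + k)))).
    { destruct (omega_mono (O:=O) (n:=n) (m:=n + k) ltac:(lia)) as [H|H].
      - eapply lt_trans'; [exact Hn|]. destruct (hTh _ (Hwm (n + k))) as [[_ [Hs1 Ht]] _].
        apply Ht; auto. rewrite (omega_star n Hone). rewrite <- (omega_star (n + k) Hone). auto.
      - rewrite <- H; auto. }
    assert (Hkm : ltT (addOm al b) (OmegaN O (n + k))).
    { destruct (omega_mono (O:=O) (n:=k) (m:=n + k) ltac:(lia)) as [H|H];
        [eapply ltT_trans; eauto| rewrite <- H; auto]. }
    assert (Hex : exists t, exists z, wfT z /\ ltT (addOm al b) z /\ ltO O (star z) b /\ leO O b (Th z) /\ Th z = t).
    { exists (Th (OmegaN O (n + k))), (OmegaN O (n + k)). repeat split; auto.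
      - rewrite omega_star; auto.
      - right; auto. }
    destruct (wf_min Hex) as [t [[ze [Hze1 [Hze2 [Hze3 [Hze4 Hze5]]]]] Hmin]].
    assert (HstarXi : star (addOm al b) = b).
    { apply le_antisym; [apply S3; [right; auto| left; auto]| apply S2]. }
    assert (Hzb : leO O (Th ze) b).
    { apply (proj2 (hTh _ Hze1)); auto.
      intros z Hz Hzz Hzb. destruct (ltT_total z (addOm al b)) as [H|[H|H]].
      - apply K; auto.
      - subst z. rewrite HstarXi in Hzb. exfalso; exact (lt_irr Hzb).
      - apply NNPP; intro Hn'. apply nlt_le in Hn'.
        assert (Ht : leO O t (Th z)) by (apply Hmin; exists z; repeat split; auto).
        destruct (hTh _ Hze1) as [[_ [_ Ht3]] _].
        assert (H0 : ltO O (Th z) (Th ze)) by (apply Ht3; auto; eapply lt_le; eauto).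
        rewrite Hze5 in H0. exact (le_nlt Ht H0). }
    assert (Hze : Th ze = b) by (apply le_antisym; auto).
    apply hfix. split; [auto|]. split; [|split].
    - rewrite HstarXi, Hxi, fs_app by discriminate. rewrite fs_last by auto.
      rewrite <- addOm_nz by auto.
      destruct (maxO_cases (star al) (one O)) as [HM [HM1 HM2]].
      eapply le_lt; [apply S3; eauto|]. destruct HM as [-> | ->]; auto.
    - rewrite HstarXi, Hxi, tau_app by discriminate. apply tau_last; auto.
    - exists ze. repeat split; auto. rewrite HstarXi; auto. }
  assert (Hmax : ltO O (star (addOm al b)) s).
  { destruct (maxO_cases (star al) b) as [HM [HM1 HM2]].
    eapply le_lt; [apply S3; eauto|]. destruct HM as [-> | ->]; auto. }
  split.
  - intro n; right; auto.
  - intros c Hc. eapply le_trans'; [| apply (proj2 Hs); exact Hc].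
    apply (proj2 (hTh _ Hwfxi)); auto.
Qed.
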